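(* Let $\mathcal N$ be a single-mode phase-insensitive $s$-sender bosonic Gaussian multiple-access channel that is global covariant ($\delta_k=0$ for all $k$) or global contravariant ($\delta_k=1$ for all $k$). Then $\mathcal N=\Psi\circ\mathcal B$, where $\mathcal B$ is a passive linear-optical (beamsplitter) map taking the $s$ input modes to the single mode $\hat a_{\rm mix}=\sum_k v_k\hat a_{A_k}$ for a unit vector $v\in\mathbb C^s$ (discarding the other output ports), and $\Psi$ is a single-mode phase-insensitive bosonic Gaussian channel that is covariant in the global covariant case and contravariant in the global contravariant case.
   Context: Single-mode phase-insensitive bosonic Gaussian MAC: sender $k$ controls one mode $A_k$; the output is $\hat a_B=\sum_{k=1}^sw_k((1-\delta_k)\hat a_{A_k}+\delta_k\hat a^\dagger_{A_k})+u_1\hat a_{E',1}+u_2\hat a^\dagger_{E',2}$ with $w_k\in\mathbb C$, $\delta_k\in\{0,1\}$, $u_1,u_2\ge0$, environment modes in vacuum, $\sum_k(1-2\delta_k)|w_k|^2+u_1^2-u_2^2=1$. A single-mode phase-insensitive bosonic Gaussian channel is $\hat a_{\rm out}=w((1-\delta)\hat a_{\rm in}+\delta\hat a^\dagger_{\rm in})+u_1\hat e_1+u_2\hat e_2^\dagger$ with vacuum environment modes and $(1-2\delta)|w|^2+u_1^2-u_2^2=1$; covariant if $\delta=0$, contravariant if $\delta=1$. *)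

(* Defs.v *)
(* Complex numbers are R[i] (mathcomp-real-closed) over an
   arbitrary real closed field R (the physical case is R = the reals). *)
From HB Require Import structures.
From mathcomp Require Import all_boot all_order all_algebra.
From mathcomp Require Import complex.
Set Implicit Arguments. Unset Strict Implicit. Unset Printing Implicit Defensive.
Import Order.TTheory GRing.Theory Num.Theory.
Local Open Scope ring_scope.

(* Modes of the problem: the s sender modes A_k (inl k) and two vacuum
   environment modes E_1 = inr false, E_2 = inr true. *)
Definition mode (s : nat) := ('I_s + bool)%type.
Definition modeA {s : nat} (k : 'I_s) : mode s := inl k.
Definition modeE1 {s : nat} : mode s := inr false.
Definition modeE2 {s : nat} : mode s := inr true.

(* A linear operator expression  sum_m (c_m a_m + d_m a_m^dagger):
   coefficient of (m, false) is that of a_m, of (m, true) that of a_m^dagger. *)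
Definition opexpr (R : rcfType) (s : nat) := {ffun (mode s * bool) -> R[i]}.

Definition ann (R : rcfType) (s : nat) (m : mode s) : opexpr R s :=
  [ffun p => ((p.1 == m) && ~~ p.2)%:R].

Definition dag (R : rcfType) (s : nat) (X : opexpr R s) : opexpr R s :=
  [ffun p => Num.conj (X (p.1, ~~ p.2))].

Definition cre (R : rcfType) (s : nat) (m : mode s) : opexpr R s := dag (ann R m).

Definition mac_out (R : rcfType) (s : nat) (w : 'I_s -> R[i]) (delta : 'I_s -> bool)
  (u1 u2 : R) : opexpr R s :=
  \sum_(k < s) w k *: ((1 - (delta k)%:R) *: ann R (modeA k)
                        + (delta k)%:R *: cre R (modeA k))
  + (real_complex R u1) *: ann R modeE1 + (real_complex R u2) *: cre R modeE2.

(* Physicality constraint of the MAC (u1,u2 >= 0 and the CCR condition). *)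
Definition mac_valid (R : rcfType) (s : nat) (w : 'I_s -> R[i]) (delta : 'I_s -> bool)
  (u1 u2 : R) : Prop :=
  0 <= u1 /\ 0 <= u2 /\
  \sum_(k < s) (1 - 2 * (delta k)%:R) * `|w k| ^+ 2 + (real_complex R u1) ^+ 2 - (real_complex R u2) ^+ 2 = 1.

Definition psi_out (R : rcfType) (s : nat) (w : R[i]) (delta : bool) (u1 u2 : R)
  (X : opexpr R s) : opexpr R s :=
  w *: ((1 - delta%:R) *: X + delta%:R *: dag X)
  + (real_complex R u1) *: ann R modeE1 + (real_complex R u2) *: cre R modeE2.

Definition psi_valid (R : rcfType) (w : R[i]) (delta : bool) (u1 u2 : R) : Prop :=
  0 <= u1 /\ 0 <= u2 /\
  (1 - 2 * delta%:R) * `|w| ^+ 2 + (real_complex R u1) ^+ 2 - (real_complex R u2) ^+ 2 = 1.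

(* Output mode of the beamsplitter map B: a_mix = sum_k v_k a_{A_k}
   (the other output ports being discarded). *)
Definition mix (R : rcfType) (s : nat) (v : 'I_s -> R[i]) : opexpr R s :=
  \sum_(k < s) v k *: ann R (modeA k).

Definition unit_vec (R : rcfType) (s : nat) (v : 'I_s -> R[i]) : Prop :=
  \sum_(k < s) `|v k| ^+ 2 = 1.

(* Main.v *)
Require Import Defs.
From HB Require Import structures.
From mathcomp Require Import all_boot all_order all_algebra.
From mathcomp Require Import complex.
Import Order.TTheory GRing.Theory Num.Theory.
Local Open Scope ring_scope.

Lemma dag0 (R : rcfType) (s : nat) : dag (0 : opexpr R s) = 0.
Proof. by apply/ffunP => p; rewrite !ffunE rmorph0. Qed.

Lemma dagD (R : rcfType) (s : nat) (X Y : opexpr R s) : dag (X + Y) = dag X + dag Y.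
Proof. by apply/ffunP => p; rewrite !ffunE rmorphD. Qed.

Lemma dagZ (R : rcfType) (s : nat) (a : R[i]) (X : opexpr R s) :
  dag (a *: X) = Num.conj a *: dag X.
Proof. by apply/ffunP => p; rewrite !ffunE rmorphM. Qed.

Lemma dag_sum (R : rcfType) (s n : nat) (F : 'I_n -> opexpr R s) :
  dag (\sum_(k < n) F k) = \sum_(k < n) dag (F k).
Proof. exact: (big_morph (@dag R s) (@dagD R s) (@dag0 R s)). Qed.

Lemma exists_v (R : rcfType) (s : nat) (w : 'I_s -> R[i]) : (0 < s)%N ->
  exists v : 'I_s -> R[i], unit_vec v /\
    forall k, sqrtC (\sum_(k < s) `|w k| ^+ 2) * v k = w k.
Proof.
move=> hs; set S := \sum_(k < s) _; set N := sqrtC S.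
have hN2 : N ^+ 2 = S by rewrite sqrtCK.
have hS0 : 0 <= S by apply: sumr_ge0 => k _; rewrite exprn_ge0.
have hNn : `|N| = N by rewrite ger0_norm // sqrtC_ge0.
have [N0|Nn0] := eqVneq N 0.
  have S0 : S = 0 by rewrite -hN2 N0 expr0n.
  have w0 : forall k, w k = 0.
    move=> k; have := @psumr_eq0P _ _ xpredT (fun k => `|w k| ^+ 2) _ S0 k isT.
    move=> /(_ (fun j _ => exprn_ge0 2 (normr_ge0 (w j)))).
    by move/eqP; rewrite expf_eq0 /= normr_eq0 => /eqP.
  exists (fun k => (k == Ordinal hs)%:R); split.
    rewrite /unit_vec (bigD1 (Ordinal hs)) //= normr1 expr1n big1 ?addr0 //.
    by move=> k /negbTE ->; rewrite mulr0n normr0 expr0n.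
  by move=> k; rewrite -/S -/N N0 mul0r w0.
exists (fun k => w k / N); split; last first.
  by move=> k; rewrite -/S -/N mulrC divfK.
have S0 : S != 0 by rewrite -hN2 expf_neq0.
rewrite /unit_vec.
under eq_bigr do rewrite normrM normfV hNn exprMn exprVn hN2.
by rewrite -mulr_suml divff.
Qed.

Theorem lemma1 (R : rcfType) (s : nat) (w : 'I_s -> R[i]) (delta : 'I_s -> bool)
  (u1 u2 : R) (b : bool) :
  (0 < s)%N ->
  mac_valid w delta u1 u2 ->
  (forall k, delta k = b) ->
  exists v : 'I_s -> R[i], unit_vec v /\
    exists (w' : R[i]) (u1' u2' : R),
      psi_valid w' b u1' u2' /\
      mac_out w delta u1 u2 = psi_out w' b u1' u2' (mix v).
Proof.
move=> hs [hu1 [hu2 hv]] hd.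
set S := \sum_(k < s) `|w k| ^+ 2.
set N := sqrtC S.
have hN2 : N ^+ 2 = S by rewrite sqrtCK.
have hS0 : 0 <= S by apply: sumr_ge0 => k _; rewrite exprn_ge0.
have hNn : `|N| = N by rewrite ger0_norm // sqrtC_ge0.
have hval : psi_valid N b u1 u2.
  rewrite /psi_valid; split; [exact: hu1|split; [exact: hu2|]].
  rewrite hNn hN2 /S mulr_sumr; apply: etrans hv; congr (_ + _ - _).
  by apply: eq_bigr => k _; rewrite hd.
rewrite /mac_out /psi_out /mix.
under eq_bigr do rewrite hd.
case: b hval hd => hval hd.
- have hS' : \sum_(k < s) `|Num.conj (w k)| ^+ 2 = S.
    by apply: eq_bigr => k _; rewrite norm_conjC.
  have [v [uv hv']] := @exists_v _ _ (fun k => Num.conj (w k)) hs.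
  rewrite hS' -/N in hv'.
  exists v; split => //; exists N, u1, u2; split => //.
  rewrite /= subrr !scale0r !add0r !scale1r dag_sum scaler_sumr.
  congr (_ + _ + _); apply: eq_bigr => k _.
  rewrite dagZ scalerA; congr (_ *: _); last by rewrite scale0r add0r scale1r.
  have := congr1 Num.conj (hv' k).
  rewrite rmorphM conjCK => <-; congr (_ * _); apply: geC0_conj; by rewrite sqrtC_ge0.
- have [v [uv hv']] := @exists_v _ _ w hs.
  exists v; split => //; exists N, u1, u2; split => //.
  rewrite /= subr0 !scale0r !addr0 !scale1r scaler_sumr.
  congr (_ + _ + _); apply: eq_bigr => k _.
  by rewrite scale1r (scale0r (cre R (modeA k))) addr0 scalerA hv'.
Qed.
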